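(* Let $G=(V,E)$ be an undirected graph (finite or infinite), $\widehat A$ a color class of $G$, and $X$ a partitive set of $G$ with $X\subsetneq\widetilde A$. Then there exists $a\in\widetilde A\setminus X$ such that $(a,x)\in\widehat A$ for every $x\in X$.
   Context: A graph $G=(V,E)$ has vertex set $V$ and edge set $E\subseteq V^2$; it is undirected if $E$ is irreflexive and symmetric. A set $X\subseteq V$ is a partitive set of $G$ if for all $a,b\in X$ and $c\in V\setminus X$: $(a,c)\in E\Leftrightarrow(b,c)\in E$ and $(c,a)\in E\Leftrightarrow(c,b)\in E$. Implication classes: on $E$ define $(a,b)\Gamma(a',b')$ iff either $a=a'$ and $(b,b')\notin E$, or $b=b'$ and $(a,a')\notin E$; the classes of the transitive closure $\Gamma^*$ are the implication classes. For an implication class $A$, $A^{-1}=\{(b,a):(a,b)\in A\}$ and the color class is $\widehat A=A\cup A^{-1}$. $\widetilde A$ denotes the set of vertices spanned by $\widehat A$ (vertices $a$ with $(a,b)\in\widehat A$ for some $b$). *)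

(* Defs.v *)
From Stdlib Require Import Relations.

Section Graphs.
Context {V : Type}.

Definition undirected (E : V -> V -> Prop) : Prop :=
  (forall a, ~ E a a) /\ (forall a b, E a b -> E b a).

Definition partitive (E : V -> V -> Prop) (X : V -> Prop) : Prop :=
  forall a b c, X a -> X b -> ~ X c ->
    (E a c <-> E b c) /\ (E c a <-> E c b).

Definition Gamma (E : V -> V -> Prop) (p q : V * V) : Prop :=
  E (fst p) (snd p) /\ E (fst q) (snd q) /\
  ((fst p = fst q /\ ~ E (snd p) (snd q)) \/
   (snd p = snd q /\ ~ E (fst p) (fst q))).

(* A is an implication class: an equivalence class of Γ* (on E). *)
Definition implication_class (E : V -> V -> Prop) (A : V * V -> Prop) : Prop :=
  exists e : V * V, E (fst e) (snd e) /\
    forall f, A f <-> (f = e \/ clos_trans (V * V) (Gamma E) e f).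

Definition color_class (A : V * V -> Prop) (p : V * V) : Prop :=
  A p \/ A (snd p, fst p).

Definition spanned (A : V * V -> Prop) (a : V) : Prop :=
  exists b, color_class A (a, b).

End Graphs.

(* Main.v *)
Require Import Defs.
From Stdlib Require Import Relations Classical ClassicalEpsilon.

Section S.
Variables (V : Type) (E : V -> V -> Prop) (X : V -> Prop).
Hypothesis Hirr : forall a, ~ E a a.
Hypothesis Hsym : forall a b, E a b -> E b a.
Hypothesis Hpart : partitive E X.

Definition crt := clos_refl_trans (V * V) (Gamma E).

Lemma Gamma_sym p q : Gamma E p q -> Gamma E q p.
Proof.
  destruct p as [a b], q as [c d]; unfold Gamma; simpl.
  intros [H1 [H2 [[-> H]|[-> H]]]]; repeat split; auto.
  - left; split; auto.
  - right; split; auto.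
Qed.

Lemma crt_sym p q : crt p q -> crt q p.
Proof.
  induction 1.
  - apply rt_step, Gamma_sym; auto.
  - apply rt_refl.
  - eapply rt_trans; eauto.
Qed.

Definition internal (p : V * V) := X (fst p) /\ X (snd p).

Lemma Gamma_internal p q : Gamma E p q -> internal p -> internal q.
Proof.
  destruct p as [a b], q as [c d]; unfold Gamma, internal; simpl.
  intros [H1 [H2 [[<- H]|[<- H]]]] [Xa Xb]; split; auto; apply NNPP; intro Hn.
  - destruct (Hpart a b d Xa Xb Hn) as [[h _] _]. apply H, h, H2.
  - destruct (Hpart a b c Xa Xb Hn) as [_ [_ h]]. apply H, Hsym, h, H2.
Qed.

Lemma crt_internal p q : crt p q -> internal p -> internal q.
Proof.
  induction 1; auto. apply Gamma_internal; auto.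
Qed.

Variable x : V.
Hypothesis Xx : X x.

Definition t (v : V) : V := if excluded_middle_informative (X v) then x else v.
Definition Tau (p : V * V) : V * V := (t (fst p), t (snd p)).

Lemma t_in v : X v -> t v = x.
Proof. unfold t; destruct excluded_middle_informative; tauto. Qed.
Lemma t_out v : ~ X v -> t v = v.
Proof. unfold t; destruct excluded_middle_informative; tauto. Qed.

Lemma modL a b c : X a -> X b -> ~ X c -> E a c -> E b c.
Proof. intros Ha Hb Hc H. apply (Hpart a b c Ha Hb Hc); auto. Qed.
Lemma modR a b c : X a -> X b -> ~ X c -> E c a -> E c b.
Proof. intros Ha Hb Hc H. apply (Hpart a b c Ha Hb Hc); auto. Qed.

Lemma Tau_step p q : Gamma E p q -> ~ internal p -> ~ internal q ->
  crt (Tau p) (Tau q).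
Proof.
  destruct p as [a b], q as [c d]; unfold Gamma, internal, Tau; simpl.
  intros [H1 [H2 [[<- H]|[<- H]]]] Np Nq.
  - destruct (classic (X a)) as [Xa|Xa].
    + assert (~ X b) by tauto. assert (~ X d) by tauto.
      rewrite t_in, t_out, t_out by auto.
      apply rt_step; unfold Gamma; simpl; repeat split; eauto using modL.
    + rewrite (t_out a) by auto.
      destruct (classic (X b)) as [Xb|Xb]; destruct (classic (X d)) as [Xd|Xd].
      * rewrite !t_in by auto. apply rt_refl.
      * rewrite t_in, t_out by auto. apply rt_step; unfold Gamma; simpl.
        repeat split; eauto using modR. left; split; auto.
        intro h. apply H. eauto using modL.
      * rewrite t_out, t_in by auto. apply rt_step; unfold Gamma; simpl.
        repeat split; eauto using modR. left; split; auto.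
        intro h. apply H. apply Hsym. apply Hsym in h. eauto using modL.
      * rewrite !t_out by auto. apply rt_step; unfold Gamma; simpl; auto.
  - destruct (classic (X b)) as [Xb|Xb].
    + assert (~ X a) by tauto. assert (~ X c) by tauto.
      rewrite (t_in b), (t_out a), (t_out c) by auto.
      apply rt_step; unfold Gamma; simpl; repeat split; eauto using modR.
    + rewrite (t_out b) by auto.
      destruct (classic (X a)) as [Xa|Xa]; destruct (classic (X c)) as [Xc|Xc].
      * rewrite !t_in by auto. apply rt_refl.
      * rewrite t_in, t_out by auto. apply rt_step; unfold Gamma; simpl.
        repeat split; eauto using modL. right; split; auto.
        intro h. apply H. apply Hsym. apply Hsym in h. eauto using modL.
      * rewrite t_out, t_in by auto. apply rt_step; unfold Gamma; simpl.
        repeat split; eauto using modL. right; split; auto.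
        intro h. apply H. eauto using modL.
      * rewrite !t_out by auto. apply rt_step; unfold Gamma; simpl; auto.
Qed.

Lemma Tau_crt (P : V * V -> Prop) :
  (forall p q, P p -> Gamma E p q -> P q) -> (forall p, P p -> ~ internal p) ->
  forall p q, crt p q -> P p -> crt (Tau p) (Tau q).
Proof.
  intros HP HN p q H. apply clos_rt_rt1n_iff in H.
  induction H; intros Pp.
  - apply rt_refl.
  - eapply rt_trans. apply Tau_step; eauto. apply IHclos_refl_trans_1n; eauto.
Qed.

End S.

Lemma A_crt V (E : V -> V -> Prop) (e f : V * V) :
  (f = e \/ clos_trans (V * V) (Gamma E) e f) <-> crt V E e f.
Proof.
  split.
  - intros [->|H]. apply rt_refl. apply clos_t_clos_rt; auto.
  - intro H. apply clos_rt_rtn1_iff in H. induction H.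
    + auto.
    + right. destruct IHclos_refl_trans_n1 as [->|h].
      apply t_step; auto. eapply t_trans; eauto. apply t_step; auto.
Qed.

Theorem proposition3p2 (V : Type) (E : V -> V -> Prop) (A : V * V -> Prop)
  (X : V -> Prop) :
  undirected E ->
  implication_class E A ->
  partitive E X ->
  (forall x, X x -> spanned A x) ->
  (exists y, spanned A y /\ ~ X y) ->
  exists a, spanned A a /\ ~ X a /\ forall x, X x -> color_class A (a, x).
Proof.
  intros [Hirr Hsym] [e [He HA]] Hpart HX [y [Hy Ny]].
  assert (HAc : forall f, A f <-> crt V E e f).
  { intro f. rewrite HA. apply A_crt. }
  assert (Hstep : forall p q, A p -> Gamma E p q -> A q).
  { intros p q Hp Hg. apply HAc. apply HAc in Hp. eapply rt_trans; eauto.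
    apply rt_step; auto. }
  assert (Hni : forall p, A p -> ~ internal V X p).
  { intros p Hp Hi.
    assert (Ie : internal V X e).
    { eapply crt_internal; eauto. apply crt_sym; auto. apply HAc; auto. }
    destruct Hy as [b [Hb|Hb]].
    - apply HAc in Hb. apply Ny, (crt_internal V E X Hsym Hpart _ _ Hb Ie).
    - apply HAc in Hb. apply Ny, (crt_internal V E X Hsym Hpart _ _ Hb Ie). }
  destruct (classic (exists x0, X x0)) as [[x0 Xx0]|Hno].
  2:{ exists y. repeat split; auto. intros x Xx; exfalso; eauto. }
  destruct (HX x0 Xx0) as [b Hb].
  assert (Nb : ~ X b).
  { intro Xb. destruct Hb as [Hb|Hb]; apply (Hni _ Hb); split; simpl; auto. }
  exists b. split; [|split; auto].
  { exists x0. destruct Hb as [Hb|Hb]; [right|left]; simpl; auto. }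
  intros x Xx.
  destruct (HX x Xx) as [c Hc].
  assert (Nc : ~ X c).
  { intro Xc. destruct Hc as [Hc|Hc]; apply (Hni _ Hc); split; simpl; auto. }
  assert (Key : forall f g, A f -> A g -> Tau V X x g = g -> A (Tau V X x f)).
  { intros f g Af Ag Tg. apply HAc. apply HAc in Af. apply HAc in Ag.
    eapply rt_trans. exact Ag. rewrite <- Tg.
    apply (Tau_crt V E X Hsym Hpart x Xx A); auto.
    - eapply rt_trans. apply crt_sym; eauto. auto.
    - apply HAc; auto. }
  assert (Tg : exists g, A g /\ Tau V X x g = g).
  { destruct Hc as [Hc|Hc]; [exists (x, c)|exists (c, x)]; split; auto;
    unfold Tau; simpl; rewrite (t_in V X x x Xx), (t_out V X x c Nc); auto. }
  destruct Tg as [g [Ag Tg]].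
  destruct Hb as [Hb|Hb].
  - right. simpl. generalize (Key _ _ Hb Ag Tg). unfold Tau; simpl.
    rewrite (t_in V X x x0 Xx0), (t_out V X x b Nb); auto.
  - left. generalize (Key _ _ Hb Ag Tg). unfold Tau; simpl.
    rewrite (t_in V X x x0 Xx0), (t_out V X x b Nb); auto.
Qed.
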